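(* Let $A=\langle a,b\mid\ \rangle$ and $B=\langle c,d\mid\ \rangle$ be free groups of rank two, let $C\le A$ be the subgroup generated by $\{a,\ a^{b^2}(a^b)^{-1}a\}$ and $D\le B$ the subgroup generated by $\{c^{-1},\ c^{d^2}(c^d)^{-1}c\}$. Then $C$ is relatively torsion-free in $A$ and $D$ is relatively torsion-free in $B$.
   Context: Notation $x^y=y^{-1}xy$. A subgroup $H\le K$ is relatively torsion-free if $gh_1gh_2\cdots gh_k\ne1$ for all $g\in K\setminus H$, $k\ge1$, $h_i\in H$. *)

(* Defs.v *)
From mathcomp Require Import all_boot.
Set Implicit Arguments. Unset Strict Implicit. Unset Printing Implicit Defensive.

(* A letter: (generator, inverted?).  generator false = first generator
   (a resp. c), true = second generator (b resp. d). *)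
Definition letter := (bool * bool)%type.
Definition flip (x : letter) : letter := (x.1, ~~ x.2).

Fixpoint reduced (w : seq letter) : bool :=
  match w with
  | x :: ((y :: _) as t) => (y != flip x) && reduced t
  | _ => true
  end.

Definition push (x : letter) (w : seq letter) : seq letter :=
  match w with
  | y :: t => if y == flip x then t else x :: w
  | [::] => [:: x]
  end.

Lemma reduced_tail x w : reduced (x :: w) -> reduced w.
Proof. by case: w => //= y t /andP[]. Qed.

Lemma push_reduced x w : reduced w -> reduced (push x w).
Proof.
case: w => [|y t] //= Hw; case: ifP => Hy /=; first exact: reduced_tail Hw.
by rewrite Hy Hw.
Qed.

Definition FG2 := {w : seq letter | reduced w}.

Lemma foldr_push_reduced (u v : seq letter) :
  reduced v -> reduced (foldr push v u).
Proof. by elim: u => //= x u IH Hv; apply: push_reduced; apply: IH. Qed.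

Lemma foldl_push_reduced (u acc : seq letter) :
  reduced acc -> reduced (foldl (fun a x => push (flip x) a) acc u).
Proof.
by elim: u acc => //= x u IH acc Hacc; apply: IH; apply: push_reduced.
Qed.

Definition fg_one : FG2 := exist _ [::] isT.
Definition fg_mul (u v : FG2) : FG2 :=
  exist _ (foldr push (sval v) (sval u)) (foldr_push_reduced (sval u) (svalP v)).
Definition fg_inv (u : FG2) : FG2 :=
  exist _ (foldl (fun a x => push (flip x) a) [::] (sval u))
        (foldl_push_reduced (sval u) (isT : reduced [::])).
Definition fg_conj (x y : FG2) : FG2 := fg_mul (fg_inv y) (fg_mul x y).

Definition fg_gen1 : FG2 := exist _ [:: (false, false)] isT.
Definition fg_gen2 : FG2 := exist _ [:: (true, false)] isT.

Inductive gen_sub (S : FG2 -> Prop) : FG2 -> Prop :=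
  | gen_one : gen_sub S fg_one
  | gen_mul s w : S s -> gen_sub S w -> gen_sub S (fg_mul s w)
  | gen_mulV s w : S s -> gen_sub S w -> gen_sub S (fg_mul (fg_inv s) w).

Definition alt_prod (g : FG2) (hs : seq FG2) : FG2 :=
  foldr (fun h acc => fg_mul g (fg_mul h acc)) fg_one hs.

Definition rel_torsion_free (H : FG2 -> Prop) : Prop :=
  forall g : FG2, ~ H g ->
  forall hs : seq FG2, 0 < size hs -> (forall i, i < size hs -> H (nth fg_one hs i)) ->
  alt_prod g hs <> fg_one.

(* Main.v *)
Require Import Defs.
From mathcomp Require Import all_boot ssralg ssrnum ssrint zify.
Set Implicit Arguments. Unset Strict Implicit. Unset Printing Implicit Defensive.
Section Free.
Variable T : eqType.
Notation L := (T * bool)%type.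
Definition fl (x : L) : L := (x.1, ~~ x.2).
Lemma flK : involutive fl. Proof. by case=> ? []. Qed.
Lemma fl_neq x : (x == fl x) = false.
Proof. by case: x => ? [] ; rewrite /fl /= xpair_eqE eqxx. Qed.
Lemma eq_fl x y : (x == fl y) = (fl x == y).
Proof. by rewrite -(inj_eq (can_inj flK)) flK. Qed.

Fixpoint rd (w : seq L) : bool :=
  match w with x :: ((y :: _) as t) => (y != fl x) && rd t | _ => true end.
Definition ps (x : L) (w : seq L) :=
  match w with y :: t => if y == fl x then t else x :: w | [::] => [:: x] end.
Definition red (w : seq L) := foldr ps [::] w.

Lemma rd_tail x w : rd (x :: w) -> rd w.
Proof. by case: w => //= y t /andP[]. Qed.

Lemma ps_rd x w : rd w -> rd (ps x w).
Proof.
case: w => [|y t] //= Hw; case: ifP => Hy /=; first exact: rd_tail Hw.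
by rewrite Hy Hw.
Qed.

Lemma foldr_rd u w : rd w -> rd (foldr ps w u).
Proof. by elim: u => //= x u IH Hw; apply: ps_rd; apply: IH. Qed.

Lemma rd_red w : rd (red w). Proof. exact: foldr_rd. Qed.

Lemma red_id w : rd w -> red w = w.
Proof.
elim: w => //= x w IH Hw; rewrite IH ?(rd_tail Hw) //.
by case: w Hw {IH} => //= y t /andP[/negbTE -> _].
Qed.

Lemma psK x z : rd z -> ps x (ps (fl x) z) = z.
Proof.
case: z => [|y t] /=; first by rewrite ?eqxx ?flK.
rewrite flK; case: eqP => [-> |ne] Hz.
  by case: t Hz => //= y' t' /andP[/negbTE -> _].
by rewrite /= eqxx.
Qed.

Lemma red_cat u v : red (u ++ v) = foldr ps (red v) u.
Proof. by rewrite /red foldr_cat. Qed.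

Lemma redR u v : red (u ++ red v) = red (u ++ v).
Proof. by rewrite !red_cat (red_id (rd_red v)). Qed.

Lemma foldr_red w u : rd w -> foldr ps w u = foldr ps w (red u).
Proof.
move=> Hw; elim: u => //= x u ->.
have: rd (red u) by exact: rd_red.
case: (red u) => [|y r] //= Hr.
case: ifP => //= /eqP ->.
by rewrite psK // foldr_rd // (rd_tail Hr).
Qed.

Lemma redL u v : red (red u ++ v) = red (u ++ v).
Proof. by rewrite !red_cat -foldr_red // rd_red. Qed.

Lemma red_cancel u x v : red (u ++ x :: fl x :: v) = red (u ++ v).
Proof. by rewrite !red_cat /= psK // rd_red. Qed.

Definition winv (w : seq L) := rev (map fl w).
Lemma winvK : involutive winv.
Proof. by move=> w; rewrite /winv map_rev revK (mapK flK). Qed.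
Lemma winv_cat u v : winv (u ++ v) = winv v ++ winv u.
Proof. by rewrite /winv map_cat rev_cat. Qed.

Lemma red_winv w : red (w ++ winv w) = [::].
Proof.
elim: w => //= x w IH.
rewrite /winv /= rev_cons -cats1 -/(winv w) catA -redL IH /=.
by rewrite eqxx.
Qed.

Lemma red_winvl w : red (winv w ++ w) = [::].
Proof. by rewrite -{2}(winvK w) red_winv. Qed.

Lemma red_mid u w v : red (u ++ w ++ winv w ++ v) = red (u ++ v).
Proof. by rewrite -redR (catA w) -(redL (w ++ winv w)) red_winv /= redR. Qed.

Lemma red_lcancel u X : red (u ++ X) = red u -> red X = [::].
Proof.
move=> H.
have -> : red X = red (winv u ++ u ++ X) by rewrite catA -redL red_winvl.
by rewrite -redR H redR red_winvl.
Qed.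

Lemma all_ps (P : pred L) x w : P x -> all P w -> all P (ps x w).
Proof.
case: w => [|y t] /= Px; first by rewrite Px.
move=> /andP[Py Pt]; case: ifP => _ //=; by rewrite Px Py Pt.
Qed.

Lemma all_red (P : pred L) w : all P w -> all P (red w).
Proof. by elim: w => //= x w IH /andP[Px Pw]; apply: all_ps => //; apply: IH. Qed.

Definition jn (u v : seq L) :=
  if u is x :: u' then (if v is y :: _ then y != fl (last x u') else true) else true.

Lemma rd_cat u v : rd (u ++ v) = [&& rd u, rd v & jn u v].
Proof.
elim: u => [|x u IH]; first by rewrite /= andbT.
case: u IH => [|z u] IH.
  by case: v {IH} => [|y t] //=; rewrite andbC.
have E : rd (x :: ((z :: u) ++ v)) = (z != fl x) && rd ((z :: u) ++ v) by [].
have E2 : rd [:: x, z & u] = (z != fl x) && rd (z :: u) by [].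
rewrite cat_cons E IH E2 /=.
by rewrite !andbA.
Qed.


Lemma rd_catl u v : rd (u ++ v) -> rd u.
Proof. by rewrite rd_cat => /and3P[]. Qed.
Lemma rd_catr u v : rd (u ++ v) -> rd v.
Proof. by rewrite rd_cat => /and3P[]. Qed.

Fixpoint wpow (Y : seq L) n := if n is n'.+1 then Y ++ wpow Y n' else [::].

Lemma last_wpow x Y1 n : last x (Y1 ++ wpow (x :: Y1) n) = last x Y1.
Proof.
elim: n => [|n IH] /=; first by rewrite cats0.
by rewrite last_cat /= IH.
Qed.

Lemma fl_fst x : (fl x).1 = x.1. Proof. by []. Qed.

Lemma pow_red Y x Y1 : rd Y -> Y = x :: Y1 -> forall n,
  exists Z, red (wpow Y n.+1) = x :: Z /\ last x Z = last x Y1.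
Proof.
have [m] := ubnP (size Y); elim: m Y x Y1 => // m IH Y x Y1 sz HY EY n.
case: (eqVneq (last x Y1) (fl x)) => [Hl|Hl].
- case/lastP: Y1 EY Hl => [|Y2 z] EY Hl.
    by move: Hl => /= /eqP; rewrite fl_neq.
  rewrite last_rcons in Hl; subst z.
  case: Y2 EY => [|x2 Y3] EY.
    by move: HY; rewrite EY /= eqxx.
  move: (HY); rewrite EY -cats1 -cat_cons rd_cat => /and3P[H1 H2 H3].
  move: H1 => /= /andP[Hx2 HY2].
  move: H3; rewrite /= (inj_eq (can_inj flK)) => Hl2.
  have [|Z2 [EZ2 LZ2]] := IH (x2 :: Y3) x2 Y3 _ HY2 erefl n.
    by move: sz; rewrite EY /= size_rcons ltnS => H; exact: leq_trans (leqnSn _) H.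
  have key : forall k, red (wpow Y k.+1) = red (x :: wpow (x2 :: Y3) k.+1 ++ [:: fl x]).
    elim=> [|k IHk]; first by rewrite /= !cats0 EY -cats1.
    rewrite [wpow Y _]/= -redR IHk redR EY -cats1.
    rewrite [wpow (x2 :: Y3) _]/=.
    have -> : ((x :: (x2 :: Y3) ++ [:: fl x]) ++ x :: (x2 :: Y3 ++ wpow (x2 :: Y3) k) ++ [:: fl x])
       = (x :: x2 :: Y3) ++ fl x :: fl (fl x) :: ((x2 :: Y3 ++ wpow (x2 :: Y3) k) ++ [:: fl x])
      by rewrite flK /= -!catA.
    by rewrite red_cancel /= -!catA /= -!catA.
  exists ((x2 :: Z2) ++ [:: fl x]); split; last by rewrite /= !cats1 !last_rcons.
  transitivity (red (wpow Y n.+1)); first by rewrite EY -cats1. rewrite key.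
  have -> : x :: wpow (x2 :: Y3) n.+1 ++ [:: fl x] = [:: x] ++ (wpow (x2 :: Y3) n.+1 ++ [:: fl x]) by [].
  rewrite -redR -(redL (wpow (x2 :: Y3) n.+1)) EZ2 redR red_id //.
  rewrite catA rd_cat; apply/and3P; split => //=.
  + rewrite Hx2 /=; have := rd_red (wpow (x2 :: Y3) n.+1); by rewrite EZ2.
  + by rewrite LZ2 (inj_eq (can_inj flK)).
- exists (Y1 ++ wpow Y n); split; last by rewrite EY last_wpow.
  have Hr : forall k, rd (wpow Y k.+1).
    elim=> [|k IHk]; first by rewrite /= cats0.
    rewrite [wpow Y _]/= rd_cat HY IHk /=.
    by rewrite EY /= eq_fl eq_sym.
  by rewrite red_id // -cat_cons -EY.
Qed.

Variable pJ : pred T.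
Definition isJ (x : L) := pJ x.1.

Fixpoint altw (Y : seq L) (Hs : seq (seq L)) :=
  if Hs is H :: Hs' then Y ++ H ++ altw Y Hs' else [::].

Lemma jn_ok (x y : L) : isJ x -> ~~ isJ y -> (y != fl x) && (x != fl y).
Proof.
rewrite /isJ => Jx Jy; apply/andP; split; apply/eqP=> E.
  by move: Jy; rewrite E /= Jx.
by move: Jx; rewrite E /= (negbTE Jy).
Qed.

Lemma core_inv Y x Y1 (Hs : seq (seq L)) : Y = x :: Y1 -> rd Y -> ~~ isJ x ->
  ~~ isJ (last x Y1) -> all (all isJ) Hs ->
  Hs = [::] \/ exists n t, red (altw Y Hs) = red (wpow Y n.+1) ++ t /\
      (if t is y :: _ then isJ y else true).
Proof.
move=> EY HY Jx Jl; elim: Hs => [|H Hs IH] /=; first by left.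
move=> /andP[JH JHs]; right; have {IH} := IH JHs.
rewrite -(redR Y (H ++ _)) -(redL H) -(redR (red H)).
have RHJ : all isJ (red H) by exact: all_red.
have RHr : rd (red H) by exact: rd_red.
have Y1r : red (wpow Y 1) = Y by rewrite /= cats0 red_id.
have HWr := rd_red (altw Y Hs).
move=> IH.
have [W0|[n [t [Et Ht]]]] : red (altw Y Hs) = [::] \/ exists n t,
   red (altw Y Hs) = red (wpow Y n.+1) ++ t /\ (if t is y :: _ then isJ y else true).
  by case: IH => [->|h]; [left | right].
- rewrite W0 cats0.
  case E: (red H) RHJ RHr => [|y RH] RHJ RHr.
    by exists 0, [::]; rewrite /= !cats0 red_id.
  exists 0, (y :: RH); split; last by case/andP: RHJ.
  rewrite (red_id RHr) Y1r red_id // rd_cat HY RHr /=.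
  case/andP: RHJ => Jy _; rewrite EY.
  by have /andP[] := jn_ok Jy Jl.
- have [Z [EZ LZ]] := pow_red HY EY n.
  have HWr' := HWr; rewrite Et in HWr'.
  have tr : rd t by move: HWr'; rewrite rd_cat => /and3P[].
  rewrite Et.
  case E: (red H) RHJ RHr => [|y RH] RHJ RHr.
  + rewrite cat0s (red_id HWr').
    have [Z' [EZ' LZ']] := pow_red HY EY n.+1.
    exists n.+1, t; split => //.
    rewrite catA -(redL (Y ++ _)) redR.
    change (Y ++ wpow Y n.+1) with (wpow Y n.+2); rewrite EZ'.
    rewrite red_id // rd_cat -EZ' rd_red tr /=.
    change (Y ++ Y ++ wpow Y n) with (wpow Y n.+2); rewrite EZ'.
    case: t Ht {Et HWr HWr' tr} => // y t Jy; rewrite /= LZ'.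
    by have /andP[] := jn_ok Jy Jl.
  + exists 0, (y :: RH ++ red (wpow Y n.+1) ++ t); split; last by case/andP: RHJ.
    have J1 : rd ((y :: RH) ++ red (wpow Y n.+1) ++ t).
      rewrite rd_cat RHr HWr' EZ /=.
      have Jl' : isJ (last y RH) by apply: (allP RHJ); exact: mem_last.
      by have /andP[] := jn_ok Jl' Jx.
    rewrite (red_id J1) -[red (Y ++ wpow Y 0)]/(red (wpow Y 1)) Y1r red_id //.
    rewrite rd_cat HY J1 /= EY.
    case/andP: RHJ => Jy _.
    by have /andP[] := jn_ok Jy Jl.
Qed.



Lemma pre_split Y : ~~ all isJ Y -> exists p x r, Y = p ++ x :: r /\ all isJ p /\ ~~ isJ x.
Proof.
elim: Y => //= y Y IH; case Jy: (isJ y) => /= H.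
  have [p [x [r [E [Jp Jx]]]]] := IH H.
  by exists (y :: p), x, r; rewrite E /= Jy.
by exists [::], y, Y; rewrite Jy.
Qed.

Lemma decomp Y : ~~ all isJ Y -> exists p x Y1 q,
  Y = p ++ (x :: Y1) ++ q /\ all isJ p /\ all isJ q /\ ~~ isJ x /\ ~~ isJ (last x Y1).
Proof.
move=> /pre_split [p [x [r [E [Jp Jx]]]]].
have : ~~ all isJ (rev (x :: r)) by rewrite all_rev /= negb_and Jx.
move=> /pre_split [p' [y [r' [E' [Jp' Jy]]]]].
have Er : x :: r = rcons (rev r') y ++ rev p'.
  by rewrite -(revK (x :: r)) E' rev_cat rev_cons.
case Ey: (rcons (rev r') y) Er => [|z Y1] Er; first by case: (rev r') Ey.
move: Er => [ez er]; subst z.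
exists p, x, Y1, (rev p'); split; first by rewrite E er.
split => //; split; first by rewrite all_rev.
split => //.
by have := congr1 (last x) Ey; rewrite last_rcons /= => <-.
Qed.

Lemma altw_rot p Y q Hs : altw (p ++ Y ++ q) Hs ++ p =
  p ++ altw Y [seq q ++ H ++ p | H <- Hs].
Proof.
elim: Hs => [|H Hs IH] /=; first by rewrite cats0.
by rewrite -!catA IH.
Qed.

Lemma core_main Y Hs : rd Y -> ~~ all isJ Y -> all (all isJ) Hs -> Hs != [::] ->
  red (altw Y Hs) != [::].
Proof.
move=> HY /decomp [p [x [Y1 [q [E [Jp [Jq [Jx Jl]]]]]]]] JHs nHs.
apply/eqP=> H0.
have HY' : rd (x :: Y1) by move: HY; rewrite E => /rd_catr /rd_catl.
have JHs' : all (all isJ) [seq q ++ H ++ p | H <- Hs].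
  apply/allP=> H' /mapP [H HH ->]; rewrite !all_cat Jq Jp andbT.
  exact: (allP JHs).
have := core_inv erefl HY' Jx Jl JHs'.
case=> [/eqP|[n [t [Et _]]]]; first by case: (Hs) nHs.
have [Z [EZ _]] := pow_red HY' erefl n.
have : red (p ++ altw (x :: Y1) [seq q ++ H ++ p | H <- Hs]) = red p.
  by rewrite -altw_rot -redL -E H0.
by move/red_lcancel; rewrite Et EZ.
Qed.

End Free.
Import GRing.Theory Num.Theory.
Local Open Scope ring_scope.

Lemma pushE : push = @ps bool. Proof. by []. Qed.
Lemma reducedE : reduced = @rd bool. Proof. by []. Qed.

Lemma fg_ext (u v : FG2) : sval u = sval v -> u = v.
Proof.
case: u v => [u pu] [v pv] /= E; subst v.
by rewrite (bool_irrelevance pu pv).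
Qed.

Lemma fg_mulE u v : sval (fg_mul u v) = red (sval u ++ sval v).
Proof.
rewrite /= red_cat (red_id (svalP v : rd (sval v))).
by rewrite pushE.
Qed.

Definition dl (e : bool) : int := if e then -1 else 1.
Fixpoint hgt (w : seq letter) : int :=
  if w is x :: w' then (if x.1 then dl x.2 else 0) + hgt w' else 0.

Definition phiA (h : int) (e : bool) : seq (int * bool) :=
  if h == -2 then (if e then [:: (-1, true); (0, false); (-2, true)]
                 else [:: (-2, false); (0, true); (-1, false)])
  else [:: (h, e)].
Fixpoint Phi (h : int) (w : seq letter) : seq (int * bool) :=
  if w is x :: w' then (if x.1 then Phi (h + dl x.2) w' else phiA h x.2 ++ Phi h w')
  else [::].

Definition wl : seq letter := [:: (true,true); (true,true); (false,false); (true,false);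
  (false,true); (true,false); (false,false)].
Definition wil : seq letter := winv wl.

Definition pw (h : int) : seq letter :=
  match h with Posz n => nseq n (true,false) | Negz n => nseq n.+1 (true,true) end.
Definition Thl (y : int * bool) : seq letter :=
  if y.1 == -2 then (if y.2 then wil else wl) else pw y.1 ++ (false, y.2) :: pw (- y.1).
Definition Th (v : seq (int * bool)) := flatten (map Thl v).

Definition pJ (m : int) := (m == 0) || (m == -2).


Lemma dlN e : dl e + dl (~~ e) = 0. Proof. by case: e. Qed.

Lemma hgt_cat u v : hgt (u ++ v) = hgt u + hgt v.
Proof. by elim: u => [|x u IH] /=; rewrite ?add0r // IH addrA. Qed.

Lemma hgt_ps (x : letter) r : hgt (ps x r) = hgt (x :: r).
Proof.
case: r => [|y r] //=; case: eqP => //= ->.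
case: x => [[] e] /=; last by rewrite !add0r.
by rewrite addrA dlN add0r.
Qed.

Lemma hgt_red w : hgt (red w) = hgt w.
Proof. by elim: w => //= x w IH; rewrite hgt_ps /= IH. Qed.

Lemma Phi_cat h u v : Phi h (u ++ v) = Phi h u ++ Phi (h + hgt u) v.
Proof.
elim: u h => [|x u IH] h /=; first by rewrite addr0.
case: ifP => _; first by rewrite IH addrA.
by rewrite IH add0r catA.
Qed.

Lemma phiA_inv h e : phiA h (~~ e) = winv (phiA h e).
Proof. by rewrite /phiA; case: eqP => _; case: e. Qed.

Lemma Phi_ps h (x : letter) r : red (Phi h (ps x r)) = red (Phi h (x :: r)).
Proof.
case: r => [|y r] //=; case: eqP => //= ->.
case: x => [[] e] /=; first by rewrite -addrA dlN addr0.
by rewrite phiA_inv -(cat0s (phiA h e ++ _)) red_mid.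
Qed.

Lemma Phi_red h w : red (Phi h (red w)) = red (Phi h w).
Proof.
elim: w h => //= x w IH h.
rewrite Phi_ps -cat1s Phi_cat -redR IH redR -Phi_cat.
by [].
Qed.

Lemma winv_nseq n (x : letter) : winv (nseq n x) = nseq n (fl x).
Proof. by rewrite /winv map_nseq rev_nseq. Qed.

Lemma pw_inv h : winv (pw h) = pw (- h).
Proof.
case: h => [[|n]|n]; first by [].
  change (winv (nseq n.+1 (true,false)) = nseq n.+1 (true,true)).
  by rewrite winv_nseq.
change (winv (nseq n.+1 (true,true)) = nseq n.+1 (true,false)).
by rewrite winv_nseq.
Qed.

Lemma pwN h : red (pw h ++ pw (- h)) = [::].
Proof. by rewrite -pw_inv red_winv. Qed.

Lemma red_nseq n (x : letter) : red (nseq n x ++ nseq n (fl x)) = [::].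
Proof.
have -> : nseq n (fl x) = winv (nseq n x) by rewrite /winv map_nseq rev_nseq.
exact: red_winv.
Qed.

Lemma nseqSr n (x : letter) : nseq n.+1 x = nseq n x ++ [:: x].
Proof. by elim: n => //= n <-. Qed.

Lemma pw_succ h e : red (pw (h + dl e)) = red (pw h ++ [:: (true, e)]).
Proof.
case: e; rewrite /dl.
- case: h => [[|n]|n].
  + by have -> : Posz 0 + -1 = Negz 0 by lia.
  + have -> : Posz n.+1 + -1 = Posz n by lia.
    change (red (nseq n (true,false)) = red (nseq n.+1 (true,false) ++ [:: (true, true)])).
    by rewrite (nseqSr n) -catA -[_ ++ _ ++ _]/(_ ++ (true,false) :: fl (true,false) :: [::]) red_cancel cats0.
  + have -> : Negz n + -1 = Negz n.+1 by lia.
    by change (red (nseq n.+2 (true,true)) = red (nseq n.+1 (true,true) ++ [:: (true, true)]));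
      rewrite -nseqSr.
- case: h => [n|[|n]].
  + have -> : Posz n + 1 = Posz n.+1 by lia.
    by change (red (nseq n.+1 (true,false)) = red (nseq n (true,false) ++ [:: (true, false)]));
      rewrite -nseqSr.
  + by have -> : Negz 0 + 1 = 0 by lia.
  + have -> : Negz n.+1 + 1 = Negz n by lia.
    change (red (nseq n.+1 (true,true)) = red (nseq n.+2 (true,true) ++ [:: (true, false)])).
    by rewrite (nseqSr n.+1) -catA -[_ ++ _ ++ _]/(_ ++ (true,true) :: fl (true,true) :: [::]) red_cancel cats0.
Qed.

Lemma Th_cat u v : Th (u ++ v) = Th u ++ Th v.
Proof. by rewrite /Th map_cat flatten_cat. Qed.

Lemma Thl_inv y : Thl (fl y) = winv (Thl y).
Proof.
case: y => m e; rewrite /Thl /=.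
case: eqP => _.
  by case: e; rewrite /wil ?winvK.
rewrite winv_cat /winv /= rev_cons -/(winv (pw (- m))) pw_inv opprK.
by rewrite -/(winv (pw m)) pw_inv -cats1 -catA.
Qed.

Lemma Th_ps (y : int * bool) r : red (Th (ps y r)) = red (Th (y :: r)).
Proof.
case: r => [|z r] //=; case: eqP => //= ->.
rewrite /Th /= -/(Th r) Thl_inv catA.
by rewrite -catA -(cat0s (Thl y ++ _)) red_mid.
Qed.

Lemma Th_red v : red (Th (red v)) = red (Th v).
Proof.
elim: v => //= y v IH.
rewrite Th_ps -cat1s Th_cat -redR IH redR -Th_cat.
by [].
Qed.

Lemma Th_phiA h e : red (Th (phiA h e)) = red (pw h ++ (false, e) :: pw (- h)).
Proof.
rewrite /phiA; case: eqP => [->|ne].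
  by case: e; vm_compute.
rewrite /Th /= cats0 /Thl /=; by case: eqP.
Qed.

Lemma ThPhi h u : red (Th (Phi h u)) = red (pw h ++ u ++ pw (- (h + hgt u))).
Proof.
elim: u h => [|x u IH] h /=.
  by rewrite addr0 pwN.
case: x => [[] e] /=.
- rewrite IH addrA -redL pw_succ redL.
  by rewrite -catA.
- rewrite Th_cat -redR IH redR -redL Th_phiA redL add0r.
  rewrite -catA cat_cons -pw_inv.
  set V := u ++ _.
  have -> : pw h ++ (false,e) :: winv (pw h) ++ pw h ++ V =
     (pw h ++ [:: (false,e)]) ++ winv (pw h) ++ winv (winv (pw h)) ++ V
    by rewrite winvK -catA.
  by rewrite red_mid -catA.
Qed.

Notation JJ := (isJ pJ).

Section Gen.
Variable S : FG2 -> Prop.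
Hypothesis hS : forall s, S s -> [/\ hgt (sval s) = 0, all JJ (red (Phi 0 (sval s))),
   hgt (sval (fg_inv s)) = 0 & all JJ (red (Phi 0 (sval (fg_inv s))))].
Hypothesis hM : forall L, L \in [:: [:: (false,false)]; [:: (false,true)]; wl; wil] ->
  forall z, gen_sub S z -> exists e, gen_sub S (fg_mul e z) /\ sval e = L.

Lemma mul_prop s z : hgt (sval s) = 0 -> all JJ (red (Phi 0 (sval s))) ->
  hgt (sval z) = 0 -> all JJ (red (Phi 0 (sval z))) ->
  hgt (sval (fg_mul s z)) = 0 /\ all JJ (red (Phi 0 (sval (fg_mul s z)))).
Proof.
move=> h1 j1 h2 j2; rewrite fg_mulE hgt_red hgt_cat h1 h2 addr0; split => //.
rewrite Phi_red Phi_cat h1 addr0 -redR -redL.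
by apply: all_red; rewrite all_cat j1 j2.
Qed.

Lemma gen_prop z : gen_sub S z -> hgt (sval z) = 0 /\ all JJ (red (Phi 0 (sval z))).
Proof.
elim=> [|s w Ss _ [h j]|s w Ss _ [h j]]; first by [].
  by case: (hS Ss) => h1 j1 _ _; apply: mul_prop.
by case: (hS Ss) => _ _ h1 j1; apply: mul_prop.
Qed.

Lemma memJ Y : all JJ Y -> exists z, gen_sub S z /\ sval z = red (Th Y).
Proof.
elim: Y => [|y Y IH] /=; first by exists fg_one; split => //; constructor.
case/andP=> Jy /IH [z [Gz Ez]].
have [L [HL EL]] : exists L, L \in [:: [:: (false,false)]; [:: (false,true)]; wl; wil] /\ Thl y = L.
  case: y Jy => m e; rewrite /isJ /pJ /= => /orP[] /eqP ->; case: e.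
  - by exists [:: (false,true)].
  - by exists [:: (false,false)].
  - by exists wil.
  - by exists wl.
have [e [Ge Ee]] := hM HL Gz.
exists (fg_mul e z); split => //.
by rewrite fg_mulE Ee Ez redR /Th /= EL.
Qed.

Lemma g_in g : hgt (sval g) = 0 -> all JJ (red (Phi 0 (sval g))) -> gen_sub S g.
Proof.
move=> h0 /memJ [z [Gz Ez]].
suff -> : g = z by [].
apply: fg_ext; rewrite Ez Th_red ThPhi h0 add0r /= cats0.
by rewrite red_id //; exact: (svalP g).
Qed.

Lemma alt_prodE g hs : sval (alt_prod g hs) = red (altw (sval g) (map sval hs)).
Proof.
elim: hs => [|h hs IH] //.
change (sval (fg_mul g (fg_mul h (alt_prod g hs))) =
  red (sval g ++ sval h ++ altw (sval g) (map sval hs))).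
by rewrite !fg_mulE IH (@redR _ (sval h)) (@redR _ (sval g)).
Qed.

Lemma red_altw (T : eqType) (Y : seq (T * bool)) Hs :
  red (altw Y Hs) = red (altw (red Y) (map (@red T) Hs)).
Proof.
elim: Hs => [|H Hs IH] //=.
have redcong : forall A A' B B' : seq (T * bool), red A = red A' -> red B = red B' ->
    red (A ++ B) = red (A' ++ B').
  by move=> A A' B B' e1 e2; rewrite -redL e1 redL -redR e2 redR.
have rr : forall A : seq (T * bool), red A = red (red A) by move=> A; rewrite (red_id (rd_red A)).
by apply: (redcong) => //; apply: (redcong).
Qed.

Lemma hgt_altw Y Hs : all (fun H => hgt H == 0) Hs -> hgt (altw Y Hs) = hgt Y *+ size Hs.
Proof.
elim: Hs => [|H Hs IH] //.
move=> /andP[/eqP h0 /IH e].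
change (hgt (Y ++ H ++ altw Y Hs) = hgt Y *+ (size Hs).+1).
by rewrite !hgt_cat h0 e add0r mulrS.
Qed.

Lemma Phi_altw Y Hs : hgt Y = 0 -> all (fun H => hgt H == 0) Hs ->
  Phi 0 (altw Y Hs) = altw (Phi 0 Y) (map (Phi 0) Hs).
Proof.
move=> hY; elim: Hs => [|H Hs IH] //.
move=> /andP[/eqP h0 /IH e].
change (Phi 0 (Y ++ H ++ altw Y Hs) = Phi 0 Y ++ Phi 0 H ++ altw (Phi 0 Y) (map (Phi 0) Hs)).
by rewrite !Phi_cat hY addr0 h0 addr0 e.
Qed.

Theorem rtf_gen : rel_torsion_free (gen_sub S).
Proof.
move=> g gn hs hs0 hsC P1.
have HC : forall h, h \in map sval hs -> hgt h = 0 /\ all JJ (red (Phi 0 h)).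
  move=> h /(nthP [::]) [i Hi <-]; rewrite size_map in Hi.
  rewrite (nth_map fg_one) //; exact: gen_prop (hsC i Hi).
have Hh : all (fun H => hgt H == 0) (map sval hs).
  by apply/allP => h /HC [-> _].
have E0 : red (altw (sval g) (map sval hs)) = [::] by rewrite -alt_prodE P1.
have hg : hgt (sval g) = 0.
  have := congr1 hgt E0; rewrite hgt_red hgt_altw // size_map /= => /eqP.
  by rewrite mulrn_eq0 => /orP[/eqP sz|/eqP //]; rewrite sz in hs0.
have : red (altw (red (Phi 0 (sval g))) (map (@red _) (map (Phi 0) (map sval hs)))) != [::].
  apply: (@core_main _ pJ).
  - exact: rd_red.
  - by apply/negP => hJ; apply: gn; exact: g_in hg hJ.
  - apply/allP => H /mapP [H1 /mapP [H2 H2in ->] ->].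
    by case: (HC _ H2in).
  - by case: (hs) hs0.
by rewrite -red_altw -Phi_altw // -Phi_red E0.
Qed.

End Gen.

Theorem mainTheorem19 :
  (* A = F(a,b), C = < a, a^(b^2) (a^b)^-1 a > *)
  let a := fg_gen1 in let b := fg_gen2 in
  (* B = F(c,d), D = < c^-1, c^(d^2) (c^d)^-1 c > *)
  let c := fg_gen1 in let d := fg_gen2 in
  let C := gen_sub (fun s => s = a \/
             s = fg_mul (fg_conj a (fg_mul b b)) (fg_mul (fg_inv (fg_conj a b)) a)) in
  let D := gen_sub (fun s => s = fg_inv c \/
             s = fg_mul (fg_conj c (fg_mul d d)) (fg_mul (fg_inv (fg_conj c d)) c)) in
  rel_torsion_free C /\ rel_torsion_free D.
Proof.
move=> a b c d C D; split.
- apply: rtf_gen.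
  + by move=> s [->|->]; split; vm_compute.
  + move=> L; rewrite !inE => /or4P[] /eqP -> z Gz.
    * by exists a; split; [apply: gen_mul; [left|]|vm_compute].
    * by exists (fg_inv a); split; [apply: gen_mulV; [left|]|vm_compute].
    * eexists; split; [apply: gen_mul; [right; reflexivity|exact Gz]|vm_compute; reflexivity].
    * eexists; split; [apply: gen_mulV; [right; reflexivity|exact Gz]|vm_compute; reflexivity].
- apply: rtf_gen.
  + by move=> s [->|->]; split; vm_compute.
  + move=> L; rewrite !inE => /or4P[] /eqP -> z Gz.
    * eexists; split; [apply: gen_mulV; [left; reflexivity|exact Gz]|vm_compute; reflexivity].
    * eexists; split; [apply: gen_mul; [left; reflexivity|exact Gz]|vm_compute; reflexivity].
    * eexists; split; [apply: gen_mul; [right; reflexivity|exact Gz]|vm_compute; reflexivity].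
    * eexists; split; [apply: gen_mulV; [right; reflexivity|exact Gz]|vm_compute; reflexivity].
Qed.
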